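(* Let $k\in\mathbb{N}$ and let $v=(v_0,\ldots,v_{2k})\in\mathbb{R}^{2k+1}$ be a singular sequence. Then the following statements are equivalent: (1) $v$ is positively recursively generated and $\varphi_0\neq 0$; (2) $v$ is negatively recursively generated and $\psi_{r'-1}\neq 0$, where $r'=\operatorname{rank} v^{(\mathrm{rev})}$; (3) $v$ is recursively generated; (4) $v$ is recursively generated, $\operatorname{rank} v=\operatorname{rank} v^{(\mathrm{rev})}=:r$, $\varphi_0\neq 0$ and $$(\psi_0,\psi_1,\ldots,\psi_{r-2},\psi_{r-1})=\left(-\frac{\varphi_1}{\varphi_0},-\frac{\varphi_2}{\varphi_0},\ldots,-\frac{\varphi_{r-1}}{\varphi_0},\frac{1}{\varphi_0}\right).$$
   Context: For $v=(v_0,\ldots,v_{2k})\in\mathbb{R}^{2k+1}$, $A_v=(v_{i+j})_{i,j=0}^k$ is the associated Hankel matrix, with columns $\mathbf{v_0},\ldots,\mathbf{v_k}$ ($\mathbf{v_j}=(v_{j+\ell})_{\ell=0}^k$). For $0\le m\le k$, $A_v(m)=(v_{i+j})_{i,j=0}^m$ is the upper left $(m+1)\times(m+1)$ corner and $A_v[m]=(v_{i+j})_{i,j=k-m}^k$ the lower right $(m+1)\times(m+1)$ corner. The rank of $v$ is $\operatorname{rank} v=k+1$ if $A_v$ is nonsingular, and otherwise $\operatorname{rank} v=\min\{i:\mathbf{v_i}\in\operatorname{span}\{\mathbf{v_0},\ldots,\mathbf{v_{i-1}}\}\}$; $v$ is singular if $\operatorname{rank} v<k+1$. The reversed sequence is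 $v^{(\mathrm{rev})}=(v_{2k},\ldots,v_0)$. $v$ is positively recursively generated (prg) if, with $r=\operatorname{rank} v$: $A_v(r-1)\succ 0$, and if $r<k+1$, then setting $(\varphi_0,\ldots,\varphi_{r-1})^T:=A_v(r-1)^{-1}(v_r,\ldots,v_{2r-1})^T$, one has $v_j=\varphi_0v_{j-r}+\cdots+\varphi_{r-1}v_{j-1}$ for $j=r,\ldots,2k$. $v$ is negatively recursively generated (nrg) if, with $r=\operatorname{rank} v^{(\mathrm{rev})}$: $A_v[r-1]\succ 0$, and if $r<k+1$, then setting $(\psi_0,\ldots,\psi_{r-1})^T:=A_v[r-1]^{-1}(v_{2k-2r+1},\ldots,v_{2k-r})^T$, one has $v_{2k-r-j}=\psi_0v_{2k-r+1-j}+\cdots+\psi_{r-1}v_{2k-j}$ for $j=0,\ldots,2k-r$. $v$ is recursively generated (rg) if it is both prg and nrg. *)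

(* Defs.v *)
(* Sequences v = (v_0,...,v_{2k}) are (2k+1)-tuples over a real
   field; v`_i = nth 0 v i. *)
From mathcomp Require Import all_boot all_order all_algebra.
Set Implicit Arguments. Unset Strict Implicit. Unset Printing Implicit Defensive.
Import Order.TTheory GRing.Theory Num.Theory.
Local Open Scope ring_scope.

Section Hankel.
Variable R : realFieldType.
Implicit Types (v : seq R) (k m : nat).

Definition hankel k v : 'M[R]_k.+1 := \matrix_(i, j) v`_(i + j).

Definition hcorner_ul v m : 'M[R]_m.+1 := \matrix_(i, j) v`_(i + j).

Definition hcorner_lr k v m : 'M[R]_m.+1 :=
  \matrix_(i, j) v`_((k - m + i) + (k - m + j)).

(* the column v_j = (v_{j+l})_{l=0}^k of A_v, written as a row vector *)
Definition hcol k v j : 'rV[R]_k.+1 := \row_l v`_(j + l).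

(* matrix whose rows are the columns v_0, ..., v_{i-1}; its row space is
   span{v_0,...,v_{i-1}} *)
Definition hcols_before k v i : 'M[R]_(i, k.+1) := \matrix_(m < i) hcol k v m.

Definition hrank k v : nat :=
  if hankel k v \in unitmx then k.+1
  else find (fun i => (hcol k v i <= hcols_before k v i)%MS) (iota 0 k.+1).

Definition posdef n (M : 'M[R]_n) : Prop :=
  M^T = M /\ forall x : 'cV[R]_n, x != 0 -> 0 < (x^T *m M *m x) ord0 ord0.

Definition phi k v (i : nat) : R :=
  let r := hrank k v in
  let b : 'cV[R]_(r.-1.+1) := \col_l v`_(r + l) in
  if (i < r)%N then (invmx (hcorner_ul v r.-1) *m b) (inord i) ord0 else 0.

Definition psi k v (i : nat) : R :=
  let r := hrank k (rev v) in
  let b : 'cV[R]_(r.-1.+1) := \col_l v`_((2 * k).+1 + l - 2 * r) in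
  if (i < r)%N then (invmx (hcorner_lr k v r.-1) *m b) (inord i) ord0 else 0.

Definition prg k v : Prop :=
  let r := hrank k v in
  (0 < r)%N /\ posdef (hcorner_ul v r.-1) /\
  ((r < k.+1)%N -> forall j : nat, (r <= j <= 2 * k)%N ->
     v`_j = \sum_(i < r) phi k v i * v`_(j - r + i)).

Definition nrg k v : Prop :=
  let r := hrank k (rev v) in
  (0 < r)%N /\ posdef (hcorner_lr k v r.-1) /\
  ((r < k.+1)%N -> forall j : nat, (j <= 2 * k - r)%N ->
     v`_(2 * k - r - j) = \sum_(i < r) psi k v i * v`_((2 * k).+1 - r - j + i)).

Definition rg k v : Prop := prg k v /\ nrg k v.

End Hankel.

(* Main.v *)
Require Import Defs.
From mathcomp Require Import all_boot all_order all_algebra.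
From mathcomp Require Import perm zify ring lra.
Set Implicit Arguments. Unset Strict Implicit. Unset Printing Implicit Defensive.
Import Order.TTheory GRing.Theory Num.Theory.
Local Open Scope ring_scope.

Ltac clean := repeat match goal with
  | H : ?T |- _ => lazymatch T with
      | is_true _ => fail | @eq nat _ _ => fail | @eq bool _ _ => fail
      | nat => fail | ordinal _ => fail | _ => clear H end end.
Ltac slia := clean; lia.

Section S.
Variable R : realFieldType.

Lemma unit_ker n (M : 'M[R]_n) (x : 'cV_n) : M \in unitmx -> M *m x = 0 -> x = 0.
Proof. by move=> Mu Mx; rewrite -(mulKmx Mu x) Mx mulmx0. Qed.

Lemma ker_unit n (M : 'M[R]_n) : (forall x : 'cV_n, M *m x = 0 -> x = 0) -> M \in unitmx.
Proof.
move=> H; rewrite -unitmx_tr -row_free_unit -kermx_eq0; apply/negPn/negP.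
case/matrix0Pn=> i [j Hij].
have := H (row i (kermx M^T))^T.
rewrite -[M in M *m _]trmxK -trmx_mul -row_mul mulmx_ker row0 trmx0 => /(_ erefl).
move/matrixP/(_ j 0); rewrite [LHS]mxE [LHS]mxE [RHS]mxE => E; by rewrite E eqxx in Hij.
Qed.

Lemma posdef_ker n (M : 'M[R]_n) (x : 'cV_n) : posdef M -> M *m x = 0 -> x = 0.
Proof.
case=> _ H Mx; apply/eqP/negPn/negP => /H.
by rewrite -mulmxA Mx mulmx0 mxE ltxx.
Qed.

Lemma posdef_unit n (M : 'M[R]_n) : posdef M -> M \in unitmx.
Proof. by move=> P; apply: ker_unit => x; apply: posdef_ker. Qed.

Lemma posdef_congr n (M Q : 'M[R]_n) : posdef M -> Q \in unitmx -> posdef (Q *m M *m Q^T).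
Proof.
case=> Ms Mp Qu; split.
  by rewrite !trmx_mul trmxK Ms mulmxA.
move=> x x0; have -> : x^T *m (Q *m M *m Q^T) *m x = (Q^T *m x)^T *m M *m (Q^T *m x).
  by rewrite trmx_mul trmxK !mulmxA.
apply: Mp; apply/negP => /eqP/(unit_ker _); rewrite unitmx_tr => /(_ Qu) E.
by rewrite E eqxx in x0.
Qed.

Definition revmx n (M : 'M[R]_n) := \matrix_(a, b) M (rev_ord a) (rev_ord b).

Lemma posdef_rev n (M : 'M[R]_n) : posdef M -> posdef (revmx M).
Proof.
move=> P; pose s : 'S_n := perm (@rev_ord_inj n).
have -> : revmx M = perm_mx s *m M *m (perm_mx s)^T.
  rewrite tr_perm_mx -col_permE -row_permE; apply/matrixP=> i j.
  by rewrite !mxE !permE.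
apply: posdef_congr => //. exact: unitmx_perm.
Qed.


Lemma sum_delta_nat N m (f : nat -> R) : (m < N)%N ->
  \sum_(l < N) (((l : nat) == m)%:R * f l) = f m.
Proof.
move=> mN; rewrite (bigD1 (Ordinal mN)) //= eqxx mulr1n mul1r big1 ?addr0 //.
move=> l /negP Hl; case: eqP => [E|]; last by rewrite mul0r.
by exfalso; apply: Hl; apply/eqP/val_inj.
Qed.

Lemma sum_widen0 N q (f : nat -> R) : (q <= N)%N ->
  \sum_(a < N) (if (a < q)%N then f a else 0) = \sum_(a < q) f a.
Proof. by move=> qN; rewrite (big_ord_widen _ f qN) [RHS]big_mkcond. Qed.

Lemma sum_rev q (f : nat -> R) : \sum_(i < q) f i = \sum_(i < q) f (q - i.+1)%N.
Proof. by rewrite (reindex_inj (@rev_ord_inj q)). Qed.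

Lemma depk (u : seq R) k i N (D : 'rV[R]_i) : (i < N.+1)%N -> (N <= k)%N ->
  hcol k u i = D *m hcols_before k u i ->
  exists2 y : 'cV_N.+1, y != 0 & hcorner_ul u N *m y = 0.
Proof.
move=> iN Nk E.
have Hl : forall l, (l <= k)%N -> u`_(i + l) = \sum_(m < i) D 0 m * u`_(m + l).
  move=> l lk; move/matrixP: E => /(_ 0 (Ordinal (leq_ltn_trans lk (ltnSn k)))).
  by rewrite !mxE /=; move->; apply: eq_bigr => m _; rewrite !mxE.
pose d (a : nat) := if @insub nat (fun x => (x < i)%N) _ a is Some o then D 0 o else 0.
have dD : forall f : nat -> R, \sum_(a < N.+1) d a * f a = \sum_(m < i) D 0 m * f m.
  move=> f; transitivity (\sum_(a < N.+1) (if (a < i)%N then d a * f a else 0)).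
    apply: eq_bigr => a _; case: ifP => // /negbT ai.
    by rewrite /d insubN ?mul0r.
  rewrite (sum_widen0 (fun a => d a * f a) (ltnW iN)).
  by apply: eq_bigr => m _; rewrite /d valK.
exists (\col_(a < N.+1) (d a - ((a : nat) == i)%:R)).
  apply/negP => /eqP/matrixP/(_ (Ordinal iN) 0); rewrite !mxE /= eqxx /d insubN ?ltnn //.
  by move/eqP; rewrite sub0r oppr_eq0 oner_eq0.
apply/matrixP => b j; rewrite !mxE.
rewrite (eq_bigr (fun a : 'I_N.+1 => d a * u`_(a + b) - ((a : nat) == i)%:R * u`_(a + b))); last first.
  by move=> a _; rewrite !mxE mulrBr addnC [_ * d a]mulrC [_ * _%:R]mulrC.
rewrite sumrB (dD (fun a => u`_(a + b))) (sum_delta_nat (fun a => u`_(a + b)) iN) -Hl ?subrr //.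
by have := ltn_ord b; slia.
Qed.


Lemma find_eqr (p : pred nat) (s : seq nat) r x0 : (r < size s)%N -> p (nth x0 s r) ->
  (forall i, (i < r)%N -> ~~ p (nth x0 s i)) -> find p s = r.
Proof.
move=> rs pr np; case: (ltngtP (find p s) r) => // H.
- have hs : has p s by rewrite has_find; apply: ltn_trans rs.
  by have := nth_find x0 hs; rewrite (negbTE (np _ H)).
- by rewrite before_find in pr.
Qed.

Lemma hrank_eq (u : seq R) k r : (0 < r)%N -> (r <= k)%N ->
  posdef (hcorner_ul u r.-1) -> (hcol k u r <= hcols_before k u r)%MS -> hrank k u = r.
Proof.
move=> r0 rk P /submxP [D E].
rewrite /hrank ifF; last first.
  apply/negP => U.
  have rk1 : (r < k.+1)%N by [].
  have [y y0 Hy] := depk rk1 (leqnn k) E.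
  by move: y0; rewrite (unit_ker U Hy) eqxx.
apply: (@find_eqr _ _ _ 0%N); first by rewrite size_iota.
  by rewrite nth_iota //; apply/submxP; exists D.
move=> i ir; rewrite nth_iota ?add0n; last by apply: leq_trans ir _; apply: leqW.
apply/negP => /submxP [D' E'].
have ir' : (i < r.-1.+1)%N by rewrite prednK.
have rk' : (r.-1 <= k)%N by apply: leq_trans (leq_pred _) rk.
have [y y0 Hy] := depk ir' rk' E'.
by move: y0; rewrite (posdef_ker P Hy) eqxx.
Qed.


Lemma invmx_sol n (M : 'M[R]_n) (b x : 'cV_n) : M \in unitmx -> M *m x = b -> invmx M *m b = x.
Proof. by move=> U <-; rewrite mulKmx. Qed.

Lemma prg_char (u : seq R) k r (c : nat -> R) : (0 < r)%N -> (r <= k)%N ->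
  posdef (hcorner_ul u r.-1) ->
  (forall j, (r <= j <= 2 * k)%N -> u`_j = \sum_(i < r) c i * u`_(j - r + i)) ->
  [/\ hrank k u = r, prg k u & forall i, (i < r)%N -> phi k u i = c i].
Proof.
case: r => [|n] // _ nk P H.
have dep : (hcol k u n.+1 <= hcols_before k u n.+1)%MS.
  apply/submxP; exists (\row_m c m); apply/matrixP => a l; rewrite !mxE.
  rewrite H; last by have := ltn_ord l; slia.
  apply: eq_bigr => m _; rewrite !mxE; congr (_ * u`_ _); slia.
have Hr := hrank_eq (ltn0Sn n) nk P dep.
have Hphi : forall i, (i < n.+1)%N -> phi k u i = c i.
  move=> i ilt; rewrite /phi Hr /= ilt.
  rewrite (@invmx_sol _ _ _ (\col_l c l)); first by rewrite mxE inordK.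
    exact: posdef_unit.
  apply/matrixP => a z; rewrite !mxE.
  rewrite [in RHS]H; last by have := ltn_ord a; slia.
  apply: eq_bigr => m _; rewrite !mxE mulrC; congr (_ * u`_ _); slia.
split => //; rewrite /prg Hr /=; split => //; split => // _ j Hj.
by rewrite H //; apply: eq_bigr => i _; rewrite Hphi.
Qed.


Lemma sum_delta_ord N m (F : 'I_N.+1 -> R) : (m < N.+1)%N ->
  \sum_(l < N.+1) (((l : nat) == m)%:R * F l) = F (inord m).
Proof.
move=> mN; rewrite (bigD1 (inord m)) //= inordK // eqxx mulr1n mul1r big1 ?addr0 //.
move=> l /negP Hl; case: eqP => [E|]; last by rewrite mul0r.
by exfalso; apply: Hl; apply/eqP/val_inj; rewrite /= inordK.
Qed.

Section Shift.
Variables (v : seq R) (k n : nat) (ph : nat -> R).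
Hypothesis nk : (n.+1 <= k)%N.
Hypothesis ph0 : ph 0%N != 0.
Hypothesis Hrec : forall j, (n.+1 <= j <= 2 * k)%N ->
  v`_j = \sum_(i < n.+1) ph i * v`_(j - n.+1 + i).

Let H s : 'M[R]_n.+1 := \matrix_(a, b) v`_(s + (a + b)).
Let C : 'M[R]_n.+1 := \matrix_(a, b) if (a < n)%N then ((b : nat) == a.+1)%:R else ph b.

Lemma H_sym s : (H s)^T = H s.
Proof. apply/matrixP => a b; rewrite /H !mxE; congr (v`_ (_ + _)); exact: addnC. Qed.

Lemma H_step s : (s + 2 * n + 1 <= 2 * k)%N -> H s.+1 = C *m H s.
Proof.
move=> hs; apply/matrixP => a b; rewrite /H /C !mxE.
under eq_bigr => l _ do rewrite !mxE.
case: (ltnP a n) => an.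
  rewrite (sum_delta_ord (fun l => v`_(s + (l + b)))); last by slia.
  rewrite inordK; last by slia.
  congr (v`_ _); slia.
have an' : a = n :> nat by have := ltn_ord a; slia.
rewrite Hrec; last by have := ltn_ord b; slia.
apply: eq_bigr => l _; congr (_ * v`_ _); slia.
Qed.

Lemma C_unit : C \in unitmx.
Proof.
apply: ker_unit => x Cx; move: Cx; rewrite /C => Cx.
have row_a : forall a, (a < n)%N -> x (inord a.+1) 0 = 0.
  move=> a an; have a1 : (a < n.+1)%N by slia.
  move/matrixP: Cx => /(_ (inord a) 0); rewrite !mxE.
  under eq_bigr => l _ do rewrite !mxE.
  rewrite inordK // an (sum_delta_ord (fun l => x l 0)) //; slia.
have xS : forall l : 'I_n, x (lift ord0 l) 0 = 0.
  move=> l; rewrite -(row_a l) //; congr (x _ 0); apply/val_inj; rewrite /= inordK //.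
  by rewrite ltnS.
have x0 : x ord0 0 = 0.
  move/matrixP: Cx => /(_ ord_max 0); rewrite !mxE.
  under eq_bigr => m _ do rewrite !mxE /= ltnn.
  rewrite big_ord_recl big1 ?addr0; last by move=> l _; rewrite xS mulr0.
  by move/eqP; rewrite mulf_eq0 (negbTE ph0) /= => /eqP.
apply/matrixP => a z; rewrite mxE (ord1 z).
case: (unliftP ord0 a) => [l ->|->] //; exact: xS.
Qed.

Lemma H_posdef : posdef (hcorner_ul v n) -> posdef (H (2 * (k - n))).
Proof.
move=> P.
suff: forall t, (2 * t + 2 * n <= 2 * k)%N -> posdef (H (2 * t)) by apply; slia.
elim => [|t IH] ht.
  suff -> : H (2 * 0) = hcorner_ul v n by [].
  by apply/matrixP => a b; rewrite /H !mxE.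
have -> : H (2 * t.+1) = C *m H (2 * t) *m C^T.
  have -> : (2 * t.+1 = (2 * t).+1.+1)%N by slia.
  rewrite H_step; last by slia.
  rewrite -H_sym H_step; last by slia.
  by rewrite trmx_mul H_sym mulmxA.
apply: posdef_congr; [apply: IH; lia | exact: C_unit].
Qed.

End Shift.



Lemma revmxK n (M : 'M[R]_n) : revmx (revmx M) = M.
Proof. by apply/matrixP => a b; rewrite !mxE !rev_ordK. Qed.

Lemma nth_revw (w : seq R) k j : size w = (2 * k).+1 -> (j <= 2 * k)%N ->
  (rev w)`_j = w`_(2 * k - j).
Proof. by move=> sw jk; rewrite nth_rev sw //; congr (w`_ _); slia. Qed.

Lemma hc_rev (w : seq R) k m : size w = (2 * k).+1 -> (m <= k)%N ->
  hcorner_ul (rev w) m = revmx (hcorner_lr k w m).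
Proof.
move=> sw mk; apply/matrixP => a b; rewrite !mxE /= (nth_revw sw) //; last first.
  by have := ltn_ord a; have := ltn_ord b; slia.
by congr (w`_ _); have := ltn_ord a; have := ltn_ord b; slia.
Qed.

Lemma hrank_le (u : seq R) k : (hrank k u <= k.+1)%N.
Proof.
rewrite /hrank; case: ifP => // _.
by apply: leq_trans (find_size _ _) _; rewrite size_iota.
Qed.

Lemma rev_solve n (M : 'M[R]_n) (x b : 'cV_n) : M *m x = b ->
  revmx M *m (\col_a x (rev_ord a) 0) = \col_a b (rev_ord a) 0.
Proof.
move=> <-; apply/matrixP => a z; rewrite !mxE (ord1 z).
rewrite (reindex_inj (@rev_ord_inj n)) /=.
by apply: eq_bigr => c _; rewrite !mxE !rev_ordK.
Qed.

Lemma phi_rev (w : seq R) k n : size w = (2 * k).+1 -> hrank k (rev w) = n.+1 ->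
  (n.+1 <= k)%N -> posdef (hcorner_lr k w n) ->
  forall i, (i < n.+1)%N -> phi k (rev w) i = psi k w (n - i).
Proof.
move=> sw Er nk P i ilt.
rewrite /phi /psi Er /= ilt ltnS leq_subr.
set Mlr := hcorner_lr k w n.
set blr := \col_l w`_((2 * k).+1 + l - 2 * n.+1).
set x := invmx Mlr *m blr.
have Mx : Mlr *m x = blr by rewrite /x mulmxA mulmxV ?mul1mx //; exact: posdef_unit.
rewrite (@invmx_sol _ _ _ (\col_a x (rev_ord a) 0)).
- by rewrite mxE; congr (x _ 0); apply/val_inj; rewrite /= inordK // inordK; slia.
- by rewrite (hc_rev sw) //; [apply: posdef_unit; apply: posdef_rev | lia].
rewrite (hc_rev sw); last by slia.
rewrite (rev_solve Mx); apply/matrixP => a z; rewrite (ord1 z) !mxE /= (nth_revw sw).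
  by congr (w`_ _); have := ltn_ord a; slia.
by have := ltn_ord a; slia.
Qed.


Lemma prg_nrg_rev (w : seq R) k : size w = (2 * k).+1 -> (hrank k (rev w) <= k)%N ->
  prg k (rev w) <-> nrg k w.
Proof.
move=> sw.
rewrite /prg /nrg /=; case Er: (hrank k (rev w)) => [|n] nk; first by split; case.
have Pe : posdef (hcorner_ul (rev w) n) <-> posdef (hcorner_lr k w n).
  rewrite (hc_rev sw); last by slia.
  by split => [/posdef_rev|/posdef_rev //]; rewrite revmxK.
have key : posdef (hcorner_lr k w n) -> forall j, (j <= 2 * k - n.+1)%N ->
    \sum_(i < n.+1) phi k (rev w) i * (rev w)`_(j + i) =
    \sum_(i < n.+1) psi k w i * w`_((2 * k).+1 - n.+1 - j + i).
  move=> P j jk; rewrite (sum_rev n.+1 (fun i => phi k (rev w) i * (rev w)`_(j + i))).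
  apply: eq_bigr => i _; rewrite (phi_rev sw Er nk P); last by slia.
  rewrite (nth_revw sw); last by have := ltn_ord i; slia.
  by congr (psi _ _ _ * w`_ _); have := ltn_ord i; slia.
split => -[n0 [P H]].
  have P' : posdef (hcorner_lr k w n) by apply/Pe.
  split => //; split => // _ j jk.
  have := H nk (j + n.+1)%N; rewrite (nth_revw sw); last by slia.
  move=> E; rewrite (_ : (2 * k - n.+1 - j = 2 * k - (j + n.+1))%N); last by slia.
  rewrite E; last by slia.
  rewrite -key //.
  apply: eq_bigr => i _; congr (_ * (rev w)`_ _); slia.
have P' : posdef (hcorner_ul (rev w) n) by apply/Pe.
split => //; split => // _ j jk.
rewrite (nth_revw sw); last by slia.
have := H nk (j - n.+1)%N; rewrite (_ : (2 * k - n.+1 - (j - n.+1) = 2 * k - j)%N); last by slia.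
move=> ->; last by slia.
by rewrite -key //; slia.
Qed.

Lemma nrg_small (w : seq R) k : hankel k w \notin unitmx -> nrg k w -> (hrank k (rev w) <= k)%N.
Proof.
move=> U [_ [P _]]; have := hrank_le (rev w) k; rewrite leq_eqVlt ltnS; case/orP => // /eqP E.
rewrite E /= in P; move: U; rewrite (posdef_unit (M := hankel k w)) //.
suff -> : hankel k w = hcorner_lr k w k by [].
by apply/matrixP => a b; rewrite !mxE subnn !add0n.
Qed.


Lemma lemA (v : seq R) k : size v = (2 * k).+1 -> (hrank k v <= k)%N -> prg k v ->
  phi k v 0 != 0 ->
  [/\ hrank k (rev v) = hrank k v, nrg k v &
      forall i, (i < hrank k v)%N -> psi k v i =
        (if i == (hrank k v).-1 then (phi k v 0)^-1 else - (phi k v i.+1 / phi k v 0))].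
Proof.
move=> sv rk [r0 [P H]] p0.
case Er: (hrank k v) => [|n] in rk r0 P H *; first by [].
have F := H rk.
set f := phi k v in F p0 *.
pose c i := if i == 0%N then (f 0%N)^-1 else - (f (n.+1 - i)%N / f 0%N).
have Plr : posdef (hcorner_lr k v n).
  have -> : hcorner_lr k v n = \matrix_(a, b) v`_(2 * (k - n) + (a + b)).
    by apply/matrixP => a b; rewrite !mxE; congr (v`_ _); slia.
  exact: (H_posdef rk p0 F P).
have Pu : posdef (hcorner_ul (rev v) n.+1.-1).
  by rewrite /= (hc_rev sv); [exact: posdef_rev | lia].
have Ru : forall j, (n.+1 <= j <= 2 * k)%N ->
    (rev v)`_j = \sum_(i < n.+1) c i * (rev v)`_(j - n.+1 + i).
  move=> j jk; rewrite (nth_revw sv); last by slia.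
  have := F (2 * k - j + n.+1)%N; rewrite big_ord_recl => E.
  rewrite big_ord_recl /c /= (nth_revw sv); last by slia.
  rewrite (_ : (2 * k - (j - n.+1 + 0) = 2 * k - j + n.+1)%N); last by slia.
  rewrite E; last by slia.
  set S := \sum_(i < n) f (lift ord0 i) * _.
  have -> : \sum_(i < n) - (f (n.+1 - bump 0 i)%N / f 0%N) * (rev v)`_(j - n.+1 + bump 0 i)
       = - (S / f 0%N).
    rewrite /S mulr_suml -sumrN.
    rewrite (sum_rev n (fun i => - (f (n.+1 - bump 0 i)%N / f 0%N) * (rev v)`_(j - n.+1 + bump 0 i))).
    apply: eq_bigr => i _.
    rewrite lift0 /bump /= !add1n (nth_revw sv); last by have := ltn_ord i; slia.
    rewrite mulNr mulrAC; congr (- (f _ * v`_ _ / _)); have := ltn_ord i; slia.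
  have E2 : v`_(2 * k - j + n.+1 - n.+1 + @ord0 n) = v`_(2 * k - j).
    by congr (v`_ _); rewrite /=; slia.
  by rewrite (_ : f ord0 = f 0%N) // E2; field.
have [Hru Pru Hphiu] := prg_char (ltn0Sn n) rk Pu Ru.
have Hn : nrg k v by apply/(prg_nrg_rev sv); rewrite ?Hru.
split => // i ilt.
have E : (n - i < n.+1)%N by rewrite ltnS leq_subr.
have := phi_rev sv Hru rk Plr E; rewrite subKn ?(ltnSE ilt) // => <-.
rewrite Hphiu //.
rewrite /c subn_eq0 /=.
case: (eqVneq i n) => [->|ne]; first by rewrite leqnn.
rewrite leqNgt ltn_neqAle ne /= (ltnSE ilt) /=; congr (- (f _ / _)); slia.
Qed.

Lemma SG (w : seq R) k N q (c : nat -> R) : size w = (2 * k).+1 -> (0 < N)%N ->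
  (N <= k)%N -> (q < N)%N ->
  (forall j, (q < j <= 2 * k)%N -> w`_j = \sum_(i < q) c i * w`_(j - q + i)) ->
  posdef (hcorner_ul (rev w) N.-1) -> False.
Proof.
move=> sw; case: N => [|N'] // _ Nk qN Hrec P.
pose y : 'cV_N'.+1 := \col_(a < N'.+1)
  (if (a : nat) == 0%N then -1 else if (a <= q)%N then c (q - a)%N else 0).
have My : hcorner_ul (rev w) N' *m y = 0.
  apply/matrixP => b z; rewrite !mxE big_ord_recl !mxE /=.
  under eq_bigr => a _ do rewrite !mxE lift0 /=.
  rewrite (eq_bigr (fun a : 'I_N' => if (a < q)%N then c (q - a.+1)%N * w`_(2 * k - b - a.+1) else 0)); last first.
    move=> a _; case: ifP => aq; last by rewrite mulr0.
    have hb : (b + a.+1 <= 2 * k)%N by have := ltn_ord b; have := ltn_ord a; slia.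
    by rewrite mulrC (nth_revw sw hb); congr (_ * w`_ _); slia.
  rewrite (sum_widen0 (fun a => c (q - a.+1)%N * w`_(2 * k - b - a.+1))); last by slia.
  rewrite (sum_rev q (fun a => c (q - a.+1)%N * w`_(2 * k - b - a.+1)))  addn0 (nth_revw sw); last by have := ltn_ord b; slia.
  rewrite (Hrec (2 * k - b)%N); last by have := ltn_ord b; slia.
  rewrite mulrN1 addrC; apply/eqP; rewrite subr_eq0; apply/eqP; apply: eq_bigr => i _.
  by congr (c _ * w`_ _); have := ltn_ord i; have := ltn_ord b; slia.
have := posdef_ker P My => /matrixP /(_ ord0 0); rewrite !mxE /= => /eqP.
by rewrite oppr_eq0 oner_eq0.
Qed.

Lemma lemB (v : seq R) k : size v = (2 * k).+1 -> hankel k v \notin unitmx ->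
  (hrank k v <= k)%N -> prg k v -> nrg k v -> phi k v 0 != 0.
Proof.
move=> sv U rk Hp Hn.
have r'k := nrg_small U Hn.
have Hpu : prg k (rev v) := (prg_nrg_rev sv r'k).2 Hn.
case: Hp => r0 [P H]; case: Hpu => r0' [P' H'].
have svu : size (rev v) = (2 * k).+1 by rewrite size_rev.
have ra : (hrank k v <= hrank k (rev v))%N.
  rewrite leqNgt; apply/negP => lt.
  apply: (@SG (rev v) k (hrank k v) (hrank k (rev v)) (phi k (rev v))) => //.
    move=> j /andP [j1 j2]; apply: H'; first by rewrite ltnS.
    by rewrite (ltnW j1) j2.
  by rewrite revK.
apply/negP => /eqP f0.
case Er: (hrank k v) => [|n] in rk r0 P H ra *; first by [].
apply: (@SG v k (hrank k (rev v)) n (fun i => phi k v i.+1)) => //.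
move=> j /andP [j1 j2]; rewrite (H rk j); last by rewrite j1 j2.
rewrite big_ord_recl f0 mul0r add0r; apply: eq_bigr => i _.
by rewrite lift0; congr (_ * v`_ _); have := ltn_ord i; slia.
Qed.

End S.

Unset Implicit Arguments.

Theorem proposition2p3 (R : realFieldType) (k : nat) (v : (2 * k).+1.-tuple R) :
  (hrank k v < k.+1)%N ->
  [<-> prg k v /\ phi k v 0 != 0;
       nrg k v /\ psi k v (hrank k (rev v)).-1 != 0;
       rg k v;
       rg k v /\ hrank k v = hrank k (rev v) /\ phi k v 0 != 0 /\
         (forall i : nat, (i < (hrank k v).-1)%N ->
            psi k v i = - (phi k v i.+1 / phi k v 0)) /\
         psi k v (hrank k v).-1 = (phi k v 0)^-1].
Proof.
move=> rlt.
have sv : size v = (2 * k).+1 := size_tuple v.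
have rk : (hrank k v <= k)%N by rewrite -ltnS.
have U : hankel k v \notin unitmx.
  by apply/negP => U; move: rlt; rewrite /hrank U ltnn.
have r0 : prg k v -> (0 < hrank k v)%N by case.
tfae=> [[Hp p0] | [Hn p0] | [Hp Hn] | [[Hp Hn] [_ [p0 _]]]].
- have [Er Hn Hpsi] := lemA sv rk Hp p0.
  split => //; rewrite Er Hpsi; last by rewrite prednK // r0.
  by rewrite eqxx invr_neq0.
- have r'k := nrg_small U Hn.
  have Hpu := (prg_nrg_rev sv r'k).2 Hn.
  have svu : size (rev v) = (2 * k).+1 by rewrite size_rev.
  case Er': (hrank k (rev v)) => [|n] in r'k p0 *; first by move: Hn; rewrite /nrg Er' => -[].
  have Plr : posdef (hcorner_lr k v n) by move: Hn; rewrite /nrg Er' => -[_ []].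
  have pu0 : phi k (rev v) 0 != 0 by rewrite (phi_rev sv Er' r'k Plr) // subn0.
  have ruk : (hrank k (rev v) <= k)%N by rewrite Er'.
  have [Er2 Hn2 _] := lemA svu ruk Hpu pu0.
  split => //.
  have r2k : (hrank k (rev (rev v)) <= k)%N by rewrite revK.
  by have := (prg_nrg_rev svu r2k).2 Hn2; rewrite revK.
- have p0 := lemB sv U rk Hp Hn.
  have [Er Hn' Hpsi] := lemA sv rk Hp p0.
  have rp := r0 Hp.
  split; first by split.
  split; first by rewrite Er.
  split => //; split.
    move=> i ilt; rewrite Hpsi; last by rewrite (leq_trans ilt) // leq_pred.
    by rewrite (ltn_eqF ilt).
  by rewrite Hpsi ?eqxx // prednK.
- by split => //.
Qed.
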